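(* Let $q\ge5$. (i) The union of the $q+1$ $\Gamma$-planes and the $q^2+q$ $2_{\mathcal C}$-planes can be partitioned into $q+1$ pencils of planes such that each pencil consists of one $\Gamma$-plane and $q$ $2_{\mathcal C}$-planes and the axis of the pencil is a tangent to $\mathcal C$. (ii) Among $E_{n\Gamma}$-lines, only lines lying in $2_{\mathcal C}$-planes can intersect tangents; if $q\not\equiv0\pmod3$, $E_{n\Gamma}$-lines lying in $2_{\mathcal C}$-planes intersect tangents in $T$-points, and if $q\equiv0\pmod3$ they intersect tangents in $TO$-points. (iii) For every $E_{n\Gamma}$-line $\ell$, the number of $T$-points on $\ell$ equals the number of $2_{\mathcal C}$-planes through $\ell$ if $q\not\equiv0\pmod 3$, and the number of $TO$-points on $\ell$ equals the number of $2_{\mathcal C}$-planes through $\ell$ if $q\equiv0\pmod3$.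
   Context: Let $\mathbb F_q$ be the field of order $q$ and $\mathrm{PG}(3,q)$ the projective space with points $\mathbf P(x_0,x_1,x_2,x_3)$. For $t\in\mathbb F_q$ put $P(t)=\mathbf P(t^3,t^2,t,1)$, and $P(\infty)=\mathbf P(1,0,0,0)$; the twisted cubic is $\mathcal C=\{P(t):t\in\mathbb F_q\cup\{\infty\}\}$. The osculating plane at $P(t)$ is $x_0-3tx_1+3t^2x_2-t^3x_3=0$ ($t\in\mathbb F_q$) and $x_3=0$ at $P(\infty)$; these are the $\Gamma$-planes. The tangent at $P(t)$, $t\in\mathbb F_q$, is the line through $P(t)$ and $\mathbf P(3t^2,2t,1,0)$; at $P(\infty)$ it is the line through $\mathbf P(1,0,0,0),\mathbf P(0,1,0,0)$. A real chord joins two distinct points of $\mathcal C$; an imaginary chord joins $P(\tau),P(\tau^q)$, $\tau\in\mathbb F_{q^2}\setminus\mathbb F_q$; chords are real chords, tangents and imaginary chords. An axis is the intersection of two distinct osculating planes at points of $\mathcal C$, or of the osculating planes at conjugate points $P(\tau),P(\tau^q)$. An $E_{n\Gamma}$-line is a line with no point of $\mathcal C$, not contained in a $\Gamma$-plane, which is neither a chord nor an axis. A $2_{\mathcal C}$-plane is a plane containing exactly two points of $\mathcal C$. For $q\not\equiv0\pmod3$, $T$-points are points off $\mathcal C$ on a tangent; for $q\equiv0\pmod3$, $TO$-points are points off $\mathcal C$ on a tangent lying in exactly one $\Gamma$-plane. *)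

(* Defs.v *)
(* Subspaces of F^4 are represented by square matrices 'M[F]_4 (row spaces);
   points/lines/planes are the canonical representatives <<A>>%MS of rank 1/2/3. *)
From HB Require Import structures.
From mathcomp Require Import all_boot all_order all_algebra all_field.
Set Implicit Arguments. Unset Strict Implicit. Unset Printing Implicit Defensive.
Import Order.TTheory GRing.Theory.
Local Open Scope ring_scope.

Definition cvec (R : fieldType) (t : R) : 'rV[R]_4 :=
  \row_(i < 4) [:: t ^+ 3; t ^+ 2; t; 1]`_i.
Definition osc_col (R : fieldType) (t : R) : 'cV[R]_4 :=
  \col_(i < 4) [:: 1; - (3 * t); 3 * t ^+ 2; - t ^+ 3]`_i.
Definition tan_vec (R : fieldType) (t : R) : 'rV[R]_4 :=
  \row_(i < 4) [:: 3 * t ^+ 2; 2 * t; 1; 0]`_i.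

Section PG3.
Variable F : finFieldType.

Definition e_row (k : nat) : 'rV[F]_4 := \row_(i < 4) (i == k :> nat)%:R.

(* None stands for the parameter infinity *)
Definition cvecO (t : option F) : 'rV[F]_4 :=
  match t with Some s => cvec s | None => e_row 0 end.
Definition cpt (t : option F) : 'M[F]_4 := <<cvecO t>>%MS.
Definition curve : {set 'M[F]_4} := [set cpt t | t : option F].

Definition pts : {set 'M[F]_4} := [set <<v>>%MS | v : 'rV[F]_4 & v != 0].
Definition lines : {set 'M[F]_4} := [set <<A>>%MS | A : 'M[F]_4 & \rank A == 2].
Definition planes : {set 'M[F]_4} := [set <<A>>%MS | A : 'M[F]_4 & \rank A == 3].

(* Gamma-planes (osculating planes); at infinity the plane x3 = 0 *)
Definition gplane (t : option F) : 'M[F]_4 :=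
  <<kermx (match t with Some s => osc_col s | None => (e_row 3)^T end)>>%MS.
Definition gplanes : {set 'M[F]_4} := [set gplane t | t : option F].

Definition tanO (t : option F) : 'rV[F]_4 :=
  match t with Some s => tan_vec s | None => e_row 1 end.
Definition tangent (t : option F) : 'M[F]_4 := <<(cvecO t + tanO t)%MS>>%MS.
Definition tangents : {set 'M[F]_4} := [set tangent t | t : option F].

Definition real_chord (l : 'M[F]_4) : Prop :=
  exists s t : option F, s <> t /\ (l == cpt s + cpt t)%MS.
Definition is_tangent (l : 'M[F]_4) : Prop := exists t, (l == tangent t)%MS.
(* imaginary chord: joins P(tau), P(tau^q), tau in F_{q^2} \ F_q, taken in any
   extension field L of F (the line is extended to L by scalars) *)
Definition ext_mx (L : fieldExtType F) (A : 'M[F]_4) : 'M[L]_4 :=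
  map_mx (fun a : F => a%:A) A.
Definition imag_chord (q : nat) (l : 'M[F]_4) : Prop :=
  exists (L : fieldExtType F) (tau : L),
    [/\ tau ^+ (q ^ 2) = tau, (forall a : F, tau <> a%:A) &
        (ext_mx L l == cvec tau + cvec (tau ^+ q))%MS].
Definition is_chord (q : nat) (l : 'M[F]_4) : Prop :=
  real_chord l \/ is_tangent l \/ imag_chord q l.

Definition real_axis (l : 'M[F]_4) : Prop :=
  exists s t : option F, gplane s <> gplane t /\ (l == gplane s :&: gplane t)%MS.
Definition imag_axis (q : nat) (l : 'M[F]_4) : Prop :=
  exists (L : fieldExtType F) (tau : L),
    [/\ tau ^+ (q ^ 2) = tau, (forall a : F, tau <> a%:A) &
        (ext_mx L l == kermx (osc_col tau) :&: kermx (osc_col (tau ^+ q)))%MS].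
Definition is_axis (q : nat) (l : 'M[F]_4) : Prop := real_axis l \/ imag_axis q l.

Definition EnG_line (q : nat) (l : 'M[F]_4) : Prop :=
  [/\ l \in lines,
      (forall P, P \in curve -> ~~ (P <= l)%MS),
      (forall G, G \in gplanes -> ~~ (l <= G)%MS),
      ~ is_chord q l & ~ is_axis q l].

Definition twoC_planes : {set 'M[F]_4} :=
  [set pi in planes | #|[set P in curve | (P <= pi)%MS]| == 2].

Definition T_points : {set 'M[F]_4} :=
  [set P in pts | (P \notin curve) && [exists T in tangents, (P <= T)%MS]].
Definition TO_points : {set 'M[F]_4} :=
  [set P in T_points | #|[set G in gplanes | (P <= G)%MS]| == 1].

Definition pencil (l : 'M[F]_4) : {set 'M[F]_4} := [set pi in planes | (l <= pi)%MS].

End PG3.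

(* Main.v *)
Require Import Defs.
From HB Require Import structures.
From mathcomp Require Import all_boot all_order all_algebra all_field.
From mathcomp Require Import fingroup pgroup abelian.
From mathcomp Require Import ring zify.
Set Implicit Arguments. Unset Strict Implicit. Unset Printing Implicit Defensive.
Import GRing.Theory.
Local Open Scope ring_scope.

Ltac simp := rewrite ?(mulr0, mul0r, addr0, add0r, subr0, sub0r, oppr0, mulr1, mul1r).

Section Alg.
Variable F : fieldType.

Definition fe (a b d e : F) (u : option F) : F :=
  match u with Some x => x ^+ 3 * a + x ^+ 2 * b + x * d + e | None => a end.
Definition fd (a b d e : F) (u : option F) : F :=
  match u with Some x => 3 * x ^+ 2 * a + 2 * x * b + d | None => b end.

Lemma taylor (a b d e x y : F) :
  fe a b d e (Some y) = fe a b d e (Some x) + fd a b d e (Some x) * (y - x)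
     + (y - x) ^+ 2 * (a * y + b + 2 * a * x).
Proof. rewrite /=; ring. Qed.

Lemma taylor' (a b d e x y : F) :
  fd a b d e (Some y) = fd a b d e (Some x) + 2 * (y - x) * (a * y + b + 2 * a * x)
     + (y - x) ^+ 2 * a.
Proof. rewrite /=; ring. Qed.

Lemma sqr_eq0 (x : F) : (x ^+ 2 == 0) = (x == 0).
Proof. by rewrite expf_eq0. Qed.

Lemma AL1 a b d e s t : s <> t ->
  fe a b d e s = 0 -> fd a b d e s = 0 -> fe a b d e t = 0 -> fd a b d e t = 0 ->
  [/\ a = 0, b = 0, d = 0 & e = 0].
Proof.
have key : forall y, fd a b d e None = 0 -> fe a b d e None = 0 ->
    fe a b d e (Some y) = 0 -> fd a b d e (Some y) = 0 -> [/\ a = 0, b = 0, d = 0 & e = 0].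
  move=> y /= B0 A0; subst => E1 D0.
  have D1 : d = 0 by move: D0; rewrite /= !mulr0 !add0r.
  subst; move: E1; rewrite /= !mulr0 !add0r => E1; by subst.
case: s => [x|]; case: t => [y|]; first last.
- by [].
- by move=> _ h1 h2 h3 h4; apply: (key y).
- by move=> _ h1 h2 h3 h4; apply: (key x).
move=> nxy ex dx ey dy.
have nyx : y - x != 0 by rewrite subr_eq0; apply/eqP => E; apply: nxy; rewrite E.
have K : a * y + b + 2 * a * x = 0.
  move: ey; rewrite (taylor _ _ _ _ x y) ex dx mul0r !add0r => /eqP; rewrite mulf_eq0 sqr_eq0 (negbTE nyx) /=.
  by move/eqP.
have A0 : a = 0.
  move: dy; rewrite (taylor' _ _ _ _ x y) K dx mulr0 !add0r => /eqP; rewrite mulf_eq0 sqr_eq0 (negbTE nyx) /=.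
  by move/eqP.
subst a; move: K; simp => B0; subst b.
move: dx => /=; simp => D0; subst d.
by move: ex => /=; simp.
Qed.

Definition nz (a b d e : F) := ~ [/\ a = 0, b = 0, d = 0 & e = 0].

Lemma subr_neq0 (x y : F) : x <> y -> x - y != 0.
Proof. by move=> nxy; rewrite subr_eq0; apply/eqP. Qed.

Lemma double_root a b d e x : fe a b d e (Some x) = 0 -> fd a b d e (Some x) = 0 ->
  forall y, fe a b d e (Some y) = (y - x) ^+ 2 * (a * y + b + 2 * a * x).
Proof. by move=> ex dx y; rewrite (taylor _ _ _ _ x y) ex dx; simp. Qed.

Lemma AL2 a b d e t u w : nz a b d e ->
  fe a b d e t = 0 -> fd a b d e t = 0 -> u <> t -> w <> t ->
  fe a b d e u = 0 -> fe a b d e w = 0 -> u = w.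
Proof.
move=> hnz; case: t => [x|] ex dx.
- have Ku : forall z, z <> Some x -> fe a b d e z = 0 ->
     (match z with Some y => a * y + b + 2 * a * x = 0 | None => a = 0 end).
    case=> [y|] // ny; rewrite (double_root ex dx) => /eqP.
    rewrite mulf_eq0 sqr_eq0 subr_eq0 => /orP [/eqP E|/eqP //].
    by case: ny; rewrite E.
  have contra : a = 0 -> b = 0 -> False.
    move=> A0 B0; subst; apply: hnz; move: dx => /=; simp => D0; subst.
    by move: ex => /=; simp.
  move=> nu nw eu ew; move: (Ku u nu eu) (Ku w nw ew).
  case: u {nu eu} => [y|]; case: w {nw ew} => [y'|] //.
  + move=> K1 K2; have : a * (y - y') = 0 by rewrite -[RHS](subrr 0) -{1}K1 -K2; ring.
    move/eqP; rewrite mulf_eq0 subr_eq0 => /orP [/eqP A0|/eqP -> //].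
    by exfalso; apply: contra => //; move: K1; rewrite A0; simp.
  + by move=> K1 A0; exfalso; apply: contra => //; move: K1; rewrite A0; simp.
  + by move=> A0 K1; exfalso; apply: contra => //; move: K1; rewrite A0; simp.
- move: ex dx => /= A0 B0; subst.
  case: u => [y|] // _; case: w => [y'|] // _ /=; simp => K1 K2.
  have : d * (y - y') = 0 by rewrite -[RHS](subrr 0) -{1}K1 -K2; ring.
  move/eqP; rewrite mulf_eq0 subr_eq0 => /orP [/eqP D0|/eqP -> //].
  by exfalso; apply: hnz; subst; move: K1; simp.
Qed.

Lemma AL3 a b d e t : nz a b d e ->
  fe a b d e t = 0 -> fd a b d e t = 0 -> (forall u, fe a b d e u = 0 -> u = t) ->
  match t with
  | Some x => [/\ a != 0, b = - (3 * x) * a, d = 3 * x ^+ 2 * a & e = - x ^+ 3 * a]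
  | None => [/\ a = 0, b = 0, d = 0 & e != 0] end.
Proof.
move=> hnz; case: t => [x|] ex dx hu.
- have a0 : a != 0 by apply/eqP => A0; have := hu None A0.
  pose z := - (b + 2 * a * x) / a.
  have ez : fe a b d e (Some z) = 0.
    rewrite (double_root ex dx) /z; apply/eqP; rewrite mulf_eq0; apply/orP; right.
    apply/eqP; field; exact: a0.
  case: (hu _ ez) => zx.
  have B : b = - (3 * x) * a.
    have H : - (b + 2 * a * x) = a * z by rewrite /z [a * _]mulrC divfK.
    rewrite zx in H.
    have -> : b = - (- (b + 2 * a * x)) - 2 * a * x by ring.
    rewrite H; ring.
  have D : d = 3 * x ^+ 2 * a by move: dx; rewrite /= B => /eqP; rewrite addrC addr_eq0 => /eqP ->; ring.
  split => //; move: ex; rewrite /= B D => /eqP; rewrite addrC addr_eq0 => /eqP ->; ring.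
- move: ex dx => /= A0 B0; subst.
  have D0 : d = 0.
    apply/eqP/negPn/negP => d0.
    have := hu (Some (- e / d)); rewrite /=; simp; rewrite divfK // addNr => H.
    by case: (H erefl).
  subst; split => //; by apply/eqP => E0; subst; apply: hnz.
Qed.

Lemma AL4n a b d e y : a = 0 -> fe a b d e (Some y) = 0 ->
  (forall z, fe a b d e z = 0 -> z = None \/ z = Some y) ->
  b = 0 \/ fd a b d e (Some y) = 0.
Proof.
move=> A0; subst => ey hz.
have [B0|b0] := eqVneq b 0; first by left.
right; pose z := - d / b - y.
have ez : fe 0 b d e (Some z) = 0.
  have : fe 0 b d e (Some z) - fe 0 b d e (Some y) = (z - y) * (b * (z + y) + d).
    rewrite /=; ring.
  rewrite ey subr0 => ->; apply/eqP; rewrite mulf_eq0; apply/orP; right.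
  rewrite /z; apply/eqP; field; exact: b0.
case: (hz _ ez) => // -[zy].
move: zy; rewrite /z => zy.
have H1 : - d / b = y + y by rewrite -(subrK y (- d / b)) zy.
have H2 : d = - ((y + y) * b) by rewrite -H1 divfK // opprK.
rewrite /= H2; ring.
Qed.

Lemma AL4 a b d e u w : nz a b d e -> u <> w ->
  fe a b d e u = 0 -> fe a b d e w = 0 ->
  (forall z, fe a b d e z = 0 -> z = u \/ z = w) ->
  fd a b d e u = 0 \/ fd a b d e w = 0.
Proof.
move=> hnz; case: u => [x|]; case: w => [y|] //.
- move=> nxy ex ey hz.
  have a0 : a != 0 by apply/eqP => A0; have := hz None A0; case.
  pose k := b + a * (x + y).
  have xy : x - y != 0 by apply: subr_neq0 => E; apply: nxy; rewrite E.
  have I1 : forall X, fe a b d e (Some X) = (X - x) * (X - y) * (a * X + k).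
    move=> X; apply: (mulfI xy); apply/eqP; rewrite -subr_eq0.
    have -> : (x - y) * fe a b d e (Some X) - (x - y) * ((X - x) * (X - y) * (a * X + k)) =
      fe a b d e (Some x) * (X - y) - fe a b d e (Some y) * (X - x) by rewrite /= /k; ring.
    by rewrite ex ey; simp.
  have I2 : forall X, (x - y) * fd a b d e (Some X) = (x - y) * ((X - y) * (a * X + k) + (X - x) * (a * X + k)
        + (X - x) * (X - y) * a) + (fe a b d e (Some x) - fe a b d e (Some y)).
    by move=> X; rewrite /= /k; ring.
  pose z := - k / a.
  have ez : fe a b d e (Some z) = 0.
    by rewrite I1 /z [a * (_ / _)]mulrC divfK // addNr mulr0.
  case: (hz _ ez) => -[zx]; [left|right]; apply: (mulfI xy); rewrite I2 ex ey subrr; simp.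
  + have -> : a * x + k = 0 by rewrite -zx /z [a * (_ / _)]mulrC divfK // addNr.
    by simp.
  + have -> : a * y + k = 0 by rewrite -zx /z [a * (_ / _)]mulrC divfK // addNr.
    by simp.
- by move=> _ ex ey hz; case: (AL4n ey ex (fun z h => match hz z h with or_introl a => or_intror a | or_intror a => or_introl a end)) => ?; [right|left].
- move=> _ ex ey hz; exact: (AL4n ex ey hz).
Qed.

End Alg.

Section Geo.
Variable F : finFieldType.

Definition i0 : 'I_4 := @Ordinal 4 0 isT.
Definition i1 : 'I_4 := @Ordinal 4 1 isT.
Definition i2 : 'I_4 := @Ordinal 4 2 isT.
Definition i3 : 'I_4 := @Ordinal 4 3 isT.

Lemma mul4 (r : 'rV[F]_4) (c : 'cV[F]_4) :
  (r *m c) 0 0 = r 0 i0 * c i0 0 + r 0 i1 * c i1 0 + r 0 i2 * c i2 0 + r 0 i3 * c i3 0.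
Proof.
rewrite mxE !big_ord_recr big_ord0 /= add0r.
by do ![congr (_ + _) | congr (_ * _) | congr (fun_of_matrix _ _ _) | apply: val_inj].
Qed.

Lemma ord4P (P : 'I_4 -> Prop) : P i0 -> P i1 -> P i2 -> P i3 -> forall i, P i.
Proof.
move=> h0 h1 h2 h3 [[|[|[|[|n]]]] Hi] //.
- by rewrite (_ : Ordinal Hi = i0) //; apply: val_inj.
- by rewrite (_ : Ordinal Hi = i1) //; apply: val_inj.
- by rewrite (_ : Ordinal Hi = i2) //; apply: val_inj.
- by rewrite (_ : Ordinal Hi = i3) //; apply: val_inj.
Qed.

Definition ev (c : 'cV[F]_4) := fe (c i0 0) (c i1 0) (c i2 0) (c i3 0).
Definition dv (c : 'cV[F]_4) := fd (c i0 0) (c i1 0) (c i2 0) (c i3 0).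

Lemma cvec_mul u c : (cvecO u *m c) 0 0 = ev c u.
Proof. by case: u => [x|]; rewrite mul4 !mxE /=; simp. Qed.

Lemma tan_mul u c : (tanO u *m c) 0 0 = dv c u.
Proof. by case: u => [x|]; rewrite mul4 !mxE /=; simp. Qed.

Lemma rV_ker (v : 'rV[F]_4) (c : 'cV[F]_4) : (v <= kermx c)%MS = ((v *m c) 0 0 == 0).
Proof.
apply/idP/idP => [/sub_kermxP ->|/eqP h]; first by rewrite mxE.
by apply/sub_kermxP/matrixP => i j; rewrite !ord1 h mxE.
Qed.

Lemma cpt_ker u (c : 'cV[F]_4) : (cpt u <= kermx c)%MS = (ev c u == 0).
Proof. by rewrite /cpt genmxE rV_ker cvec_mul. Qed.

Lemma tan_ker t (c : 'cV[F]_4) : (tangent t <= kermx c)%MS = (ev c t == 0) && (dv c t == 0).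
Proof. by rewrite /tangent genmxE addsmx_sub !rV_ker cvec_mul tan_mul. Qed.

Lemma nzP (c : 'cV[F]_4) : c != 0 -> nz (c i0 0) (c i1 0) (c i2 0) (c i3 0).
Proof.
move=> c0 [A B D E]; move/eqP: c0; apply; apply/matrixP => i j.
rewrite ord1 mxE; move: i; exact: ord4P.
Qed.

Definition oscO (t : option F) : 'cV[F]_4 :=
  match t with Some s => osc_col s | None => (e_row F 3)^T end.

Lemma gplaneE t : gplane t = <<kermx (oscO t)>>%MS.
Proof. by case: t. Qed.

Lemma osc_ev s u : (ev (oscO s) u == 0) = (u == s).
Proof.
case: s => [s|]; case: u => [x|]; rewrite /ev /= !mxE /=; simp.
- have -> : x ^+ 3 + x ^+ 2 * - (3 * s) + x * (3 * s ^+ 2) - s ^+ 3 = (x - s) ^+ 3 by ring.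
  by rewrite expf_eq0 /= subr_eq0 (inj_eq (@Some_inj _)).
- by rewrite oner_eq0.
- by rewrite oner_eq0.
- by rewrite !eqxx.
Qed.

Lemma osc_dv s : dv (oscO s) s = 0.
Proof. case: s => [s|]; rewrite /dv /= !mxE /=; simp; last by []. ring. Qed.

Lemma osc_neq0 s : oscO s != 0.
Proof.
apply/eqP => h; case: s h => [s|] /matrixP h.
- by move: (h i0 0); rewrite !mxE /= => /eqP; rewrite oner_eq0.
- by move: (h i3 0); rewrite !mxE /= => /eqP; rewrite oner_eq0.
Qed.

Lemma cpt_gplane (u s : option F) : (cpt u <= gplane s)%MS = (u == s).
Proof. by rewrite gplaneE genmxE cpt_ker osc_ev. Qed.

Lemma tan_gplane (t : option F) : (tangent t <= gplane t)%MS.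
Proof. by rewrite gplaneE genmxE tan_ker osc_dv osc_ev !eqxx. Qed.


Lemma cpt_tan (t : option F) : (cpt t <= tangent t)%MS.
Proof. by rewrite /cpt /tangent !genmxE addsmxSl. Qed.

Lemma tan_gplane_iff (t s : option F) : (tangent t <= gplane s)%MS = (t == s).
Proof.
apply/idP/eqP => [h|->]; last exact: tan_gplane.
by apply/eqP; rewrite -cpt_gplane; exact: submx_trans (cpt_tan t) h.
Qed.

Lemma cpt_inj : injective (@cpt F).
Proof. by move=> u w E; apply/eqP; rewrite -cpt_gplane E cpt_gplane. Qed.

Lemma gplane_inj : injective (@gplane F).
Proof. by move=> u w E; apply/eqP; rewrite -cpt_gplane -E cpt_gplane. Qed.

Lemma tangent_inj : injective (@tangent F).
Proof. by move=> u w E; apply/eqP; rewrite -tan_gplane_iff E tan_gplane. Qed.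

Lemma rank_col (c : 'cV[F]_4) : c != 0 -> \rank c = 1%N.
Proof. by move=> c0; rewrite -mxrank_tr rank_rV trmx_eq0 c0. Qed.

Lemma rank_ker (c : 'cV[F]_4) : c != 0 -> \rank (kermx c) = 3%N.
Proof. by move=> c0; rewrite mxrank_ker rank_col. Qed.

Lemma gplane_plane t : gplane t \in planes F.
Proof.
by rewrite gplaneE; apply/imsetP; exists (kermx (oscO t)) => //; rewrite inE rank_ker // osc_neq0.
Qed.

Lemma exists_ker (A : 'M[F]_4) : (\rank A <= 3)%N -> exists2 c : 'cV[F]_4, c != 0 & (A <= kermx c)%MS.
Proof.
move=> rA.
have K0 : cokermx A != 0.
  by rewrite -mxrank_eq0 mxrank_coker; move: rA; case: (\rank A) => [|[|[|[|]]]].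
have [j cj] : exists j, col j (cokermx A) != 0.
  apply/existsP; move: K0; apply: contraR; rewrite negb_exists => /forallP h.
  apply/eqP/matrixP => i j; move: (h j); rewrite negbK => /eqP/matrixP/(_ i 0).
  by rewrite !mxE.
exists (col j (cokermx A)) => //; apply/sub_kermxP.
by rewrite colE mulmxA mulmx_coker mul0mx.
Qed.

Lemma rank_planes pi : pi \in planes F -> \rank pi = 3%N.
Proof. by case/imsetP => A; rewrite inE => /eqP rA ->; rewrite genmxE. Qed.

Lemma rank_lines l : l \in lines F -> \rank l = 2%N.
Proof. by case/imsetP => A; rewrite inE => /eqP rA ->; rewrite genmxE. Qed.

Lemma rank_pts P : P \in pts F -> \rank P = 1%N.
Proof. by case/imsetP => v; rewrite inE => v0 ->; rewrite genmxE rank_rV v0. Qed.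

Lemma eq_rank m p (A : 'M[F]_(m, 4)) (B : 'M[F]_(p, 4)) : (A <= B)%MS -> \rank B = \rank A -> (A == B)%MS.
Proof. by move=> sAB rB; rewrite -(mxrank_leqif_eq sAB) rB. Qed.

Lemma plane_ker pi : pi \in planes F -> exists2 c : 'cV[F]_4, c != 0 & (pi == kermx c)%MS.
Proof.
move=> hp; have rp := rank_planes hp.
have [c c0 sc] : exists2 c : 'cV[F]_4, c != 0 & (pi <= kermx c)%MS by apply: exists_ker; rewrite rp.
by exists c => //; apply: eq_rank => //; rewrite rank_ker.
Qed.

Lemma genmx_eq m p (X : 'M[F]_(m, 4)) (Y : 'M[F]_(p, 4)) : (<<X>> == <<Y>>)%MS -> <<X>>%MS = <<Y>>%MS.
Proof. by rewrite !genmxE => h; apply/genmxP. Qed.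


Definition Rc (c : 'cV[F]_4) := [set u : option F | ev c u == 0].

Lemma tan_two (c : 'cV[F]_4) s t : c != 0 ->
  (tangent s <= kermx c)%MS -> (tangent t <= kermx c)%MS -> s = t.
Proof.
rewrite !tan_ker => c0 /andP[/eqP es /eqP ds] /andP[/eqP et /eqP dt].
case: (eqVneq s t) => // /eqP nst; exfalso.
by apply: (nzP c0); apply: (AL1 nst es ds et dt).
Qed.

Lemma ker_scale (k : F) (C : 'cV[F]_4) : k != 0 -> (kermx (k *: C) == kermx C)%MS.
Proof.
move=> k0; apply/andP; split; apply/sub_kermxP.
- have := mulmx_ker (k *: C); rewrite -scalemxAr => /eqP.
  by rewrite scalemx_eq0 (negbTE k0) /= => /eqP.
- by rewrite -scalemxAr mulmx_ker scaler0.
Qed.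

Lemma tan_class (c : 'cV[F]_4) t : c != 0 -> (tangent t <= kermx c)%MS ->
  (kermx c == gplane t)%MS \/ exists2 u, u != t & Rc c = [set t; u].
Proof.
move=> c0 htc; have := htc; rewrite tan_ker => /andP[/eqP et /eqP dt].
case: (boolP [forall u, (ev c u == 0) ==> (u == t)]) => [/forallP hall|].
- left; have hu : forall u, ev c u = 0 -> u = t.
    by move=> u /eqP h; apply/eqP; move: (hall u); rewrite h.
  suff h : (kermx c == kermx (oscO t))%MS.
    rewrite gplaneE; apply/eqmxP; apply: (eqmx_trans (eqmxP h)).
    apply: eqmx_sym; exact: genmxE.
  have := AL3 (nzP c0) et dt hu.
  case: t {htc et dt hall hu} => [x|] [k0 B D E].
  + have -> : c = c i0 0 *: oscO (Some x).
      apply/matrixP => i j; rewrite ord1; move: i; apply: ord4P; rewrite !mxE /=.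
      * by rewrite mulr1.
      * by rewrite B mulrC.
      * by rewrite D mulrC.
      * by rewrite E mulrC.
    exact: ker_scale k0.
  + have -> : c = c i3 0 *: oscO None.
      apply/matrixP => i j; rewrite ord1; move: i; apply: ord4P; rewrite !mxE /=.
      * by rewrite k0 mulr0.
      * by rewrite B mulr0.
      * by rewrite D mulr0.
      * by rewrite mulr1.
    exact: ker_scale E.
- rewrite negb_forall => /existsP [u]; rewrite negb_imply => /andP[/eqP eu nut].
  right; exists u => //; apply/setP => w; rewrite !inE.
  case: (eqVneq w t) => [->|nwt]; first by rewrite et eqxx.
  case: (eqVneq w u) => [->|nwu]; first by rewrite eu eqxx.
  rewrite /=; apply/negbTE/eqP => ew; move/eqP: nwu; apply.
  exact: (AL2 (nzP c0) et dt (elimN eqP nwt) (elimN eqP nut) ew eu).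
Qed.

Lemma two_tan (c : 'cV[F]_4) : c != 0 -> #|Rc c| = 2%N -> exists t, (tangent t <= kermx c)%MS.
Proof.
move=> c0 hc; have /cards2P [u [w [nuw hR]]] : #|Rc c| == 2%N by rewrite hc.
have ru : ev c u = 0.
  have : u \in Rc c by rewrite hR !inE eqxx.
  by rewrite inE => /eqP.
have rw : ev c w = 0.
  have : w \in Rc c by rewrite hR !inE eqxx orbT.
  by rewrite inE => /eqP.
have hz : forall z, ev c z = 0 -> z = u \/ z = w.
  move=> z /eqP ez; have : z \in Rc c by rewrite inE ez.
  by rewrite hR !inE => /orP [/eqP->|/eqP->]; [left|right].
case: (AL4 (nzP c0) (elimN eqP nuw) ru rw hz) => h; [exists u|exists w];
  by rewrite tan_ker ?ru ?rw /dv h eqxx.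
Qed.

Lemma curve_set (pi : 'M[F]_4) (c : 'cV[F]_4) : (pi == kermx c)%MS ->
  [set P in curve F | (P <= pi)%MS] = @cpt F @: Rc c.
Proof.
move=> /eqmxP E; apply/setP => P; rewrite inE; apply/andP/imsetP.
- case=> /imsetP [u _ ->]; rewrite E cpt_ker => eu.
  by exists u; rewrite // inE.
- case=> u; rewrite inE => eu ->; split; first by apply/imsetP; exists u.
  by rewrite E cpt_ker.
Qed.

Lemma curve_card (pi : 'M[F]_4) (c : 'cV[F]_4) : (pi == kermx c)%MS ->
  #|[set P in curve F | (P <= pi)%MS]| = #|Rc c|.
Proof. by move=> h; rewrite (curve_set h) card_imset //; exact: cpt_inj. Qed.

Lemma twoC_iff (pi : 'M[F]_4) (c : 'cV[F]_4) : pi \in planes F -> (pi == kermx c)%MS ->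
  (pi \in twoC_planes F) = (#|Rc c| == 2%N).
Proof. by move=> hp h; rewrite inE hp (curve_card h). Qed.


Lemma cap_rank1 m p (A : 'M[F]_(m, 4)) (P : 'M[F]_(p, 4)) : \rank P = 1%N -> \rank (A :&: P) = (P <= A)%MS.
Proof.
move=> rP; case: (boolP (P <= A)%MS) => hPA.
- have h1 := mxrankS (capmxSr A P).
  have h2 : (\rank P <= \rank (A :&: P))%N by rewrite mxrankS // sub_capmx hPA submx_refl.
  rewrite rP in h1 h2; lia.
- have := mxrankS (capmxSr A P); rewrite rP.
  case: (ltngtP (\rank (A :&: P)) 1) => // h _; last first.
  + move/negP: hPA; case; have : (A :&: P == P)%MS by rewrite eq_rank ?capmxSr // h rP.
    by case/andP => _ /(submx_trans) -> //; rewrite capmxSl.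
  + by move: h; case: (\rank _).
Qed.

Lemma rank_addP m p (A : 'M[F]_(m, 4)) (P : 'M[F]_(p, 4)) : \rank P = 1%N -> ~~ (P <= A)%MS -> \rank (A + P)%MS = (\rank A).+1.
Proof.
move=> rP hPA; have := mxrank_sum_cap A P; rewrite cap_rank1 // (negbTE hPA) rP /=.
lia.
Qed.

Lemma rank_tangent (t : option F) : \rank (cvecO t + tanO t)%MS = 2%N.
Proof.
have rt : \rank (tanO t) = 1%N.
  rewrite rank_rV; suff -> : tanO t != 0 by [].
  apply/eqP; case: t => [x|] /matrixP h.
  - by move: (h 0 i2); rewrite !mxE /= => /eqP; rewrite oner_eq0.
  - by move: (h 0 i1); rewrite !mxE /= => /eqP; rewrite oner_eq0.
rewrite addsmxC rank_addP ?rt //.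
- rewrite rank_rV; suff -> : cvecO t != 0 by [].
  case: t {rt} => [x|]; apply/eqP => /matrixP h.
  + by move: (h 0 i3); rewrite !mxE /= => /eqP; rewrite oner_eq0.
  + by move: (h 0 i0); rewrite !mxE /= => /eqP; rewrite oner_eq0.
- apply/sub_rVP => -[k]; case: t {rt} => [x|] /matrixP h.
  + by move: (h 0 i3); rewrite !mxE /= mulr0 => /eqP; rewrite oner_eq0.
  + by move: (h 0 i0); rewrite !mxE /= mulr0 => /eqP; rewrite oner_eq0.
Qed.

Lemma rank_tan (t : option F) : \rank (tangent t) = 2%N.
Proof. by rewrite /tangent genmxE rank_tangent. Qed.

Lemma tangent_line (t : option F) : tangent t \in lines F.
Proof. by apply/imsetP; exists (cvecO t + tanO t)%MS; rewrite // inE rank_tangent. Qed.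

Lemma rank_cpt (u : option F) : \rank (cpt u) = 1%N.
Proof.
rewrite /cpt genmxE rank_rV; suff -> : cvecO u != 0 by [].
apply/eqP => /matrixP h; case: u h => [x|] h.
- by move: (h 0 i3); rewrite !mxE /= => /eqP; rewrite oner_eq0.
- by move: (h 0 i0); rewrite !mxE /= => /eqP; rewrite oner_eq0.
Qed.


Lemma plane_eq pi pi' : pi \in planes F -> pi' \in planes F -> (pi <= pi')%MS -> pi = pi'.
Proof.
case/imsetP => A; rewrite inE => /eqP rA ->; case/imsetP => B; rewrite inE => /eqP rB -> h.
by apply: genmx_eq; apply: eq_rank => //; rewrite !genmxE rA rB.
Qed.

Lemma pencil_g (t : option F) : pencil (tangent t) :&: gplanes F = [set gplane t].
Proof.
apply/setP => pi; rewrite !inE; apply/andP/eqP.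
- by case=> /andP [_ hT] /imsetP [s _ E]; subst; move: hT; rewrite tan_gplane_iff => /eqP ->.
- move=> ->; rewrite gplane_plane tan_gplane; split => //.
  by apply/imsetP; exists t.
Qed.

Definition Hpl (t u : option F) := <<(tangent t + cpt u)%MS>>%MS.

Lemma Hpl_plane t u : u != t -> Hpl t u \in planes F.
Proof.
move=> nut; apply/imsetP; exists (tangent t + cpt u)%MS => //; rewrite inE rank_addP ?rank_tan ?rank_cpt //.
apply/negP => h; move/negP: nut; apply; rewrite -cpt_gplane.
exact: submx_trans h (tan_gplane t).
Qed.

Lemma Hpl_tan t u : (tangent t <= Hpl t u)%MS.
Proof. by rewrite /Hpl genmxE addsmxSl. Qed.

Lemma Hpl_cpt t u : (cpt u <= Hpl t u)%MS.
Proof. by rewrite /Hpl genmxE addsmxSr. Qed.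

Lemma Rc_gplane (c : 'cV[F]_4) t : (kermx c == gplane t)%MS -> Rc c = [set t].
Proof.
move=> /eqmxP G; apply/setP => u; rewrite !inE -cpt_ker.
by rewrite G cpt_gplane.
Qed.

Lemma pencil_twoC (t : option F) : #|pencil (tangent t) :&: twoC_planes F| = #|F|.
Proof.
have E : pencil (tangent t) :&: twoC_planes F = Hpl t @: [set~ t].
  apply/setP => pi; rewrite inE /pencil inE; apply/idP/imsetP.
  - case/andP => /andP [hp hT] hC.
    have [c c0 E1] := plane_ker hp.
    move: hC; rewrite (twoC_iff hp E1).
    have hTc : (tangent t <= kermx c)%MS by rewrite -(eqmxP E1).
    case: (tan_class c0 hTc) => [G|[u nut hR]].
    + by rewrite (Rc_gplane G) cards1.
    + move=> _; exists u; first by rewrite !inE.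
      apply: esym; apply: plane_eq => //; first exact: Hpl_plane.
      rewrite /Hpl genmxE addsmx_sub hT /= (eqmxP E1) cpt_ker.
      have : u \in Rc c by rewrite hR !inE eqxx orbT.
      by rewrite inE.
  - case=> u; rewrite !inE => nut ->.
    have hp := Hpl_plane nut.
    rewrite hp Hpl_tan /=.
    have [c c0 E1] := plane_ker hp.
    rewrite (curve_card E1).
    have hTc : (tangent t <= kermx c)%MS by rewrite -(eqmxP E1) Hpl_tan.
    case: (tan_class c0 hTc) => [G|[u' nut' hR]].
    + move: (Hpl_cpt t u); rewrite (eqmxP E1) (eqmxP G) cpt_gplane => h.
      by rewrite h in nut.
    + by rewrite hR cards2 [t == u']eq_sym nut'.
rewrite E card_in_imset ?cardsC1 ?card_option //.
move=> u w; rewrite !inE => nut nwt Huw.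
have [c c0 E1] := plane_ker (Hpl_plane nut).
have := Hpl_tan t u; rewrite (eqmxP E1) tan_ker => /andP [/eqP et /eqP dt].
have := Hpl_cpt t u; rewrite (eqmxP E1) cpt_ker => /eqP eu.
have := Hpl_cpt t w; rewrite -Huw (eqmxP E1) cpt_ker => /eqP ew.
exact: (AL2 (nzP c0) et dt (elimN eqP nut) (elimN eqP nwt) eu ew).
Qed.


Lemma pencil_cover (pi : 'M[F]_4) t : pi \in pencil (tangent t) ->
  pi = gplane t \/ pi \in twoC_planes F.
Proof.
rewrite inE => /andP [hp hT].
have [c c0 E1] := plane_ker hp.
have hTc : (tangent t <= kermx c)%MS by rewrite -(eqmxP E1).
case: (tan_class c0 hTc) => [G|[u nut hR]].
- left; apply: plane_eq => //; first exact: gplane_plane.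
  by rewrite (eqmxP E1) (eqmxP G).
- by right; rewrite (twoC_iff hp E1) hR cards2 [t == u]eq_sym nut.
Qed.

Lemma twoC_tan pi : pi \in twoC_planes F -> exists t, pi \in pencil (tangent t).
Proof.
move=> h; have hp : pi \in planes F by move: h; rewrite inE => /andP[].
have [c c0 E1] := plane_ker hp.
move: h; rewrite (twoC_iff hp E1) => /eqP h2.
have [t ht] := two_tan c0 h2.
by exists t; rewrite inE hp (eqmxP E1).
Qed.

Lemma part1 : exists A : {set 'M[F]_4},
     [/\ #|A| = #|F|.+1,
         (forall a, a \in A -> a \in lines F /\ is_tangent a),
         partition [set pencil a | a in A] (gplanes F :|: twoC_planes F) &
         (forall a, a \in A ->
            #|pencil a :&: gplanes F| = 1%N /\ #|pencil a :&: twoC_planes F| = #|F|)].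
Proof.
exists (tangents F); split.
- by rewrite card_imset ?card_option //; exact: tangent_inj.
- move=> a /imsetP [t _ ->]; split; first exact: tangent_line.
  by exists t; apply/eqmxP; exact: eqmx_refl.
- apply/and3P; split.
  + apply/eqP/setP => pi; apply/bigcupP/setUP.
    * case=> B /imsetP [a /imsetP [t _ ->] ->] hpi.
      case: (pencil_cover hpi) => [->|]; [left|right] => //.
      by apply/imsetP; exists t.
    * case=> [/imsetP [t _ ->]|/twoC_tan [t ht]].
      - exists (pencil (tangent t)); first by apply/imsetP; exists (tangent t) => //; apply/imsetP; exists t.
        by rewrite inE gplane_plane tan_gplane.
      - exists (pencil (tangent t)) => //.
        by apply/imsetP; exists (tangent t) => //; apply/imsetP; exists t.
  + apply/trivIsetP => B1 B2 /imsetP [a1 /imsetP [s _ ->] ->] /imsetP [a2 /imsetP [t _ ->] ->] neq.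
    rewrite -setI_eq0; apply/eqP/setP => pi; rewrite !inE; apply/negbTE/negP.
    case/andP => /andP [hp hs] /andP [_ ht].
    have [c c0 E1] := plane_ker hp.
    rewrite (eqmxP E1) in hs; rewrite (eqmxP E1) in ht.
    by move/negP: neq; apply; rewrite (tan_two c0 hs ht).
  + apply/imsetP => -[a /imsetP [t _ ->]] /setP /(_ (gplane t)).
    by rewrite !inE gplane_plane tan_gplane.
- move=> a /imsetP [t _ ->]; split; first by rewrite pencil_g cards1.
  exact: pencil_twoC.
Qed.


Lemma rank1_pts (M : 'M[F]_4) : \rank M = 1%N -> <<M>>%MS \in pts F.
Proof.
move=> rM; have M0 : M != 0 by rewrite -mxrank_eq0 rM.
have [i ri] : exists i, row i M != 0.
  apply/existsP; move: M0; apply: contraR; rewrite negb_exists => /forallP h.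
  apply/eqP/matrixP => i j; move: (h i); rewrite negbK => /eqP/matrixP/(_ 0 j).
  by rewrite !mxE.
apply/imsetP; exists (row i M); first by rewrite inE.
apply: genmx_eq; rewrite !genmxE; apply/eqmxP; apply: eqmx_sym; apply/eqmxP.
apply: eq_rank; first exact: row_sub.
by rewrite rank_rV ri rM.
Qed.

Lemma curve_cpt t : cpt t \in curve F.
Proof. by apply/imsetP; exists t. Qed.

Lemma lT_rank l t : l \in lines F -> (forall P, P \in curve F -> ~~ (P <= l)%MS) ->
  \rank (l :&: tangent t) != 0%N ->
  \rank (l :&: tangent t) = 1%N /\ \rank (l + tangent t)%MS = 3%N.
Proof.
move=> hl hc r0; have rl := rank_lines hl; have rT := rank_tan t.
have h1 := mxrankS (capmxSl l (tangent t)); rewrite rl in h1.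
have h2 := mxrank_sum_cap l (tangent t); rewrite rl rT in h2.
suff : \rank (l :&: tangent t) != 2%N by move=> h; split; lia.
apply/eqP => h2'.
have E : (l :&: tangent t == l)%MS by apply: eq_rank; rewrite ?capmxSl // h2' rl.
have slT : (l <= tangent t)%MS.
  by move/andP: E => [_ /submx_trans -> //]; rewrite capmxSr.
have : (l == tangent t)%MS by apply: eq_rank; rewrite // rl rT.
case/andP => _ hTl; move/negP: (hc _ (curve_cpt t)); apply.
exact: submx_trans (cpt_tan t) hTl.
Qed.

Lemma tan_meet s t (P : 'M[F]_4) : \rank P != 0%N ->
  (P <= tangent s)%MS -> (P <= tangent t)%MS -> s = t.
Proof.
move=> rP hs ht.
have h1 : (\rank P <= \rank (tangent s :&: tangent t))%N by rewrite mxrankS // sub_capmx hs ht.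
have h2 := mxrank_sum_cap (tangent s) (tangent t); rewrite !rank_tan in h2.
have [c c0 hc] : exists2 c : 'cV[F]_4, c != 0 & ((tangent s + tangent t)%MS <= kermx c)%MS.
  by apply: exists_ker; lia.
move: hc; rewrite addsmx_sub => /andP [h3 h4].
exact: tan_two c0 h3 h4.
Qed.

Definition Sl (l : 'M[F]_4) := [set t : option F | \rank (l :&: tangent t) != 0%N].

Lemma points_count l : l \in lines F -> (forall P, P \in curve F -> ~~ (P <= l)%MS) ->
  #|[set P in T_points F | (P <= l)%MS]| = #|Sl l|.
Proof.
move=> hl hc.
have E : [set P in T_points F | (P <= l)%MS] = (fun t => <<(l :&: tangent t)%MS>>%MS) @: Sl l.
  apply/setP => P; rewrite inE; apply/idP/imsetP.
  - case/andP; rewrite inE => /and3P [hP hnc /existsP [T /andP [/imsetP [t _ ->] hPT]]] hPl.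
    have rP := rank_pts hP.
    have hsub : (P <= l :&: tangent t)%MS by rewrite sub_capmx hPl hPT.
    have ht : t \in Sl l by move: (mxrankS hsub); rewrite rP inE -lt0n.
    exists t => //.
    move: ht; rewrite inE => /(lT_rank hl hc) [r1 _].
    move: hP => /imsetP [v _ Pv]; rewrite Pv; apply: genmx_eq; rewrite !genmxE.
    have rv := rP; rewrite Pv genmxE in rv.
    apply: eq_rank; last by rewrite r1 rv.
    by rewrite -(genmxE v) -Pv sub_capmx hPl hPT.
  - case=> t; rewrite inE => ht ->.
    have [r1 _] := lT_rank hl hc ht.
    rewrite !inE rank1_pts //= genmxE capmxSl andbT; apply/andP; split.
    + apply/negP => /imsetP [u _ hu]; move/negP: (hc _ (curve_cpt u)); apply.
      by rewrite -hu genmxE capmxSl.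
    + apply/existsP; exists (tangent t); rewrite genmxE capmxSr andbT.
      by apply/imsetP; exists t.
rewrite E card_in_imset //.
move=> s t; rewrite !inE => hs ht Est.
have [r1 _] := lT_rank hl hc hs.
apply: (@tan_meet s t <<(l :&: tangent s)%MS>>%MS); first by rewrite genmxE r1.
- by rewrite genmxE capmxSr.
- by rewrite Est genmxE capmxSr.
Qed.

Lemma planes_count l : l \in lines F -> (forall P, P \in curve F -> ~~ (P <= l)%MS) ->
  (forall G, G \in gplanes F -> ~~ (l <= G)%MS) ->
  #|[set pi in twoC_planes F | (l <= pi)%MS]| = #|Sl l|.
Proof.
move=> hl hc hg.
have Hp : forall t, t \in Sl l -> <<(l + tangent t)%MS>>%MS \in planes F.
  move=> t; rewrite inE => /(lT_rank hl hc) [_ r3].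
  by apply/imsetP; exists (l + tangent t)%MS; rewrite // inE r3.
have E : [set pi in twoC_planes F | (l <= pi)%MS] = (fun t => <<(l + tangent t)%MS>>%MS) @: Sl l.
  apply/setP => pi; rewrite inE; apply/idP/imsetP.
  - case/andP => h2 hlp; have [t ht] := twoC_tan h2.
    move: ht; rewrite inE => /andP [hp hT].
    have rl := rank_lines hl; have rp := rank_planes hp.
    have h3 := mxrankS (_ : ((l + tangent t)%MS <= pi)%MS); rewrite rp in h3.
    have {h3} h3 : (\rank (l + tangent t) <= 3)%N by apply: h3; rewrite addsmx_sub hlp hT.
    have h4 := mxrank_sum_cap l (tangent t); rewrite rl rank_tan in h4.
    have ht : t \in Sl l by rewrite inE; lia.
    exists t => //; apply: esym; apply: plane_eq; [exact: Hp|exact: hp|].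
    by rewrite genmxE addsmx_sub hlp hT.
  - case=> t ht ->; rewrite inE genmxE addsmxSl andbT.
    have hpen : <<(l + tangent t)%MS>>%MS \in pencil (tangent t).
      by rewrite inE Hp // genmxE addsmxSr.
    case: (pencil_cover hpen) => [hG|]; last by rewrite inE.
    have hgt : gplane t \in gplanes F by apply/imsetP; exists t.
    move/negP: (hg (gplane t) hgt); case.
    by rewrite -hG genmxE addsmxSl.
rewrite E card_in_imset //.
move=> s t hs ht Est.
have [c c0 E1] := plane_ker (Hp s hs).
apply: (@tan_two c) => //; rewrite -(eqmxP E1).
- by rewrite genmxE addsmxSr.
- by rewrite Est genmxE addsmxSr.
Qed.


Lemma char3 : (#|F| %% 3 = 0)%N -> (3 : F) = 0.
Proof.
move=> h3; have [p pp pc] := finPcharP F.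
have pg := abelem_pgroup (fin_ring_pchar_abelem pc).
have := card_pgroup pg; rewrite cardsT => hF.
have : (3 %| #|F|)%N by apply/dvdnP; exists (#|F| %/ 3)%N; rewrite {1}(divn_eq #|F| 3) h3 addn0.
rewrite hF Euclid_dvdX // dvdn_prime2 // => /andP [/eqP E _]; subst p.
exact: pcharf0 pc.
Qed.

Lemma gplane_in u : gplane u \in gplanes F.
Proof. by apply/imsetP; exists u. Qed.

Section Char3.
Hypothesis h3 : (3 : F) = 0.

Lemma frob_inj : injective (fun x : F => x ^+ 3).
Proof.
move=> x y /= E; apply/eqP; rewrite -subr_eq0.
have : (x - y) ^+ 3 = x ^+ 3 - y ^+ 3 - 3 * (x ^+ 2 * y - x * y ^+ 2) by ring.
by rewrite E subrr h3 mul0r subr0 => /eqP; rewrite expf_eq0.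
Qed.

Lemma gpl3 (w : 'rV[F]_4) u : (w <= gplane u)%MS =
  ((match u with Some a => w 0 i0 - a ^+ 3 * w 0 i3 | None => w 0 i3 end) == 0).
Proof.
rewrite gplaneE genmxE rV_ker mul4; case: u => [a|]; rewrite !mxE /=.
- rewrite !mulrA h3; simp; rewrite mulrN [w 0 i3 * _]mulrC.
  by [].
- by simp.
Qed.

Lemma TO_char3 l P t : l \in lines F -> (forall G, G \in gplanes F -> ~~ (l <= G)%MS) ->
  P \in pts F -> (P <= l)%MS -> (P <= tangent t)%MS ->
  [set G in gplanes F | (P <= G)%MS] = [set gplane t].
Proof.
move=> hl hg hP hPl hPT.
apply/setP => G; rewrite !inE; apply/andP/eqP; last first.
  move=> ->; split; first by apply/imsetP; exists t.
  exact: submx_trans hPT (tan_gplane t).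
case=> /imsetP [s _ ->] hPs; congr gplane.
case: (eqVneq s t) => // nst; exfalso.
have hPt := submx_trans hPT (tan_gplane t).
move: hP => /imsetP [v v0 Pv]; rewrite inE in v0; subst P.
have vP : (v <= <<v>>)%MS by rewrite genmxE.
move: (submx_trans vP hPl) (submx_trans vP hPs) (submx_trans vP hPt) => {}hPl {}hPs {}hPt.
have [V0 V3] : v 0 i0 = 0 /\ v 0 i3 = 0.
  move: hPs hPt; rewrite !gpl3.
  case: s nst => [a|]; case: t {hPT} => [b|] // nst.
  + move=> /eqP h1 /eqP h2.
    have : (a ^+ 3 - b ^+ 3) * v 0 i3 = (v 0 i0 - b ^+ 3 * v 0 i3) - (v 0 i0 - a ^+ 3 * v 0 i3) by ring.
    rewrite h1 h2 subrr.
    move/eqP; rewrite mulf_eq0 subr_eq0 => /orP [/eqP /frob_inj E|/eqP E3].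
      by rewrite E eqxx in nst.
    by split => //; move: h1; rewrite E3 mulr0 subr0.
  + by move=> /eqP h1 /eqP h2; split => //; move: h1; rewrite h2 mulr0 subr0.
  + by move=> /eqP h1 /eqP h2; split => //; move: h2; rewrite h1 mulr0 subr0.
have [i wi] : exists i, (row i l) 0 i3 != 0.
  case: (boolP [exists i, (row i l) 0 i3 != 0]) => [/existsP //|].
  rewrite negb_exists => /forallP hall; exfalso.
  move/negP: (hg (gplane None) (gplane_in None)); apply.
  by apply/row_subP => i; rewrite gpl3; move: (hall i); rewrite negbK.
move: (row i l) (row_sub i l) wi => w sw {}wi.
have [g fg gf] := injF_bij frob_inj.
set a := g (w 0 i0 / w 0 i3).
have a3 : a ^+ 3 = w 0 i0 / w 0 i3 by rewrite /a (gf (w 0 i0 / w 0 i3)).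
have hv : (v <= gplane (Some a))%MS by rewrite gpl3 V0 V3 mulr0 subr0.
have hw : (w <= gplane (Some a))%MS by rewrite gpl3 a3 divfK // subrr.
have rw : \rank w = 1%N.
  rewrite rank_rV; suff -> : w != 0 by [].
  by apply: contraNneq wi => ->; rewrite mxE.
have nwv : ~~ (w <= v)%MS.
  apply/negP => /sub_rVP [k wk]; move: wi; rewrite wk mxE V3 mulr0 eqxx.
  by [].
have rvw : \rank (v + w)%MS = 2%N by rewrite rank_addP // rank_rV v0.
have svw : ((v + w)%MS <= l)%MS by rewrite addsmx_sub hPl sw.
have : ((v + w)%MS == l)%MS by apply: eq_rank => //; rewrite rvw rank_lines.
case/andP => _ hlvw.
move/negP: (hg (gplane (Some a)) (gplane_in (Some a))); apply.
by apply: submx_trans hlvw _; rewrite addsmx_sub hv hw.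
Qed.

End Char3.


Lemma Tpt (l P : 'M[F]_4) t : (forall P, P \in curve F -> ~~ (P <= l)%MS) ->
  P \in pts F -> (P <= l)%MS -> (P <= tangent t)%MS -> P \in T_points F.
Proof.
move=> hc hP hPl hPT; rewrite inE hP /=; apply/andP; split.
- apply/negP => hPc; move/negP: (hc _ hPc); apply; exact: hPl.
- by apply/existsP; exists (tangent t); rewrite hPT andbT; apply/imsetP; exists t.
Qed.

Lemma Sl_in (l P : 'M[F]_4) t : P \in pts F -> (P <= l)%MS -> (P <= tangent t)%MS -> t \in Sl l.
Proof.
move=> hP hPl hPT; have rP := rank_pts hP.
have hsub : (P <= l :&: tangent t)%MS by rewrite sub_capmx hPl hPT.
by move: (mxrankS hsub); rewrite rP inE -lt0n.
Qed.

Lemma Hl_twoC (l : 'M[F]_4) t : l \in lines F -> (forall P, P \in curve F -> ~~ (P <= l)%MS) ->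
  (forall G, G \in gplanes F -> ~~ (l <= G)%MS) -> t \in Sl l ->
  <<(l + tangent t)%MS>>%MS \in twoC_planes F.
Proof.
move=> hl hc hg ht.
have Hp : <<(l + tangent t)%MS>>%MS \in planes F.
  move: ht; rewrite inE => /(lT_rank hl hc) [_ r3].
  by apply/imsetP; exists (l + tangent t)%MS; rewrite // inE r3.
have hpen : <<(l + tangent t)%MS>>%MS \in pencil (tangent t).
  by rewrite inE Hp genmxE addsmxSr.
case: (pencil_cover hpen) => [hG|//].
move/negP: (hg (gplane t) (gplane_in t)); case.
by rewrite -hG genmxE addsmxSl.
Qed.

End Geo.

Theorem lemma3p3 (F : finFieldType) (q : nat) :
  #|F| = q -> (5 <= q)%N ->
  (* (i) *)
  (exists A : {set 'M[F]_4},
     [/\ #|A| = q.+1,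
         (forall a, a \in A -> a \in lines F /\ is_tangent a),
         partition [set pencil a | a in A] (gplanes F :|: twoC_planes F) &
         (forall a, a \in A ->
            #|pencil a :&: gplanes F| = 1%N /\ #|pencil a :&: twoC_planes F| = q)])
  /\
  (* (ii) *)
  ((forall l T P, EnG_line q l -> T \in tangents F -> P \in pts F ->
       (P <= l)%MS -> (P <= T)%MS ->
       exists pi, pi \in twoC_planes F /\ (l <= pi)%MS)
   /\ (forall l T P, EnG_line q l -> (exists pi, pi \in twoC_planes F /\ (l <= pi)%MS) ->
       T \in tangents F -> P \in pts F -> (P <= l)%MS -> (P <= T)%MS ->
       (if (q %% 3 == 0)%N then P \in TO_points F else P \in T_points F)))
  /\
  (* (iii) *)
  (forall l, EnG_line q l ->
     (if (q %% 3 == 0)%N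
      then #|[set P in TO_points F | (P <= l)%MS]|
      else #|[set P in T_points F | (P <= l)%MS]|)
     = #|[set pi in twoC_planes F | (l <= pi)%MS]|).
Proof.
move=> hq _; subst q.
split; first exact: part1.
split; first split.
- move=> l T P [hl hc hg _ _] /imsetP [t _ ->] hP hPl hPT.
  exists <<(l + tangent t)%MS>>%MS; split.
  + exact: Hl_twoC hl hc hg (Sl_in hP hPl hPT).
  + by rewrite genmxE addsmxSl.
- move=> l T P [hl hc hg _ _] _ /imsetP [t _ ->] hP hPl hPT.
  have hT := Tpt hc hP hPl hPT.
  case: ifP => // h3.
  rewrite inE hT /= (TO_char3 (char3 (eqP h3)) hl hg hP hPl hPT).
  by rewrite cards1.
- move=> l [hl hc hg _ _].
  rewrite planes_count // -(points_count hl hc).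
  case: ifP => // h3.
  suff -> : [set P in TO_points F | (P <= l)%MS] = [set P in T_points F | (P <= l)%MS] by [].
  apply/setP => P; rewrite !inE.
  apply/andP/andP => -[hP hPl]; split => //.
  + by case/andP: hP.
  + rewrite hP /=.
    move: hP => /and3P [hP _ /existsP [T /andP [/imsetP [t _ ->] hPT]]].
    by rewrite (TO_char3 (char3 (eqP h3)) hl hg hP hPl hPT) cards1.
Qed.
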